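(* There exists an absolute constant $C>0$ such that the following holds. Let $\mathcal J$ be a joint distribution of $(p_1,p_2,y)\in[0,1]\times[0,1]\times\{0,1\}$, let $\mathcal D_1$ be the distribution of $(p_1,y)$ and $\mathcal D_2$ the distribution of $(p_2,y)$. Then $$|\mathsf{SCDL}(\mathcal D_1)^2-\mathsf{SCDL}(\mathcal D_2)^2|\le C\,\mathbb E_{\mathcal J}|p_1-p_2|\quad\text{and}\quad |\mathsf{SCDL}(\mathcal D_1)-\mathsf{SCDL}(\mathcal D_2)|\le C\sqrt{\mathbb E_{\mathcal J}|p_1-p_2|}.$$
   Context: For $x\in\mathbb R$ write $x_+=\max\{x,0\}$. For a distribution $\mathcal D$ of $(p,y)\in[0,1]\times\{0,1\}$, a positive integer $m$ and $i\in\{0,\ldots,m\}$, let $w_i(p)=(1-|mp-i|)_+$, $\pi_i=\mathbb E_{\mathcal D}[w_i(p)]$ and $q_i=\mathbb E_{\mathcal D}[w_i(p)y]/\pi_i$ (terms with $\pi_i=0$ are $0$). These are the bin weights and bin conditional means after randomly rounding $p$ to a neighbouring multiple $p'$ of $1/m$ with $\Pr[p'=i/m\mid p]=w_i(p)$. Define $$\mathsf{SCDL}_m(\mathcal D)=\max_{i=0,\ldots,m}\Big(\sum_{j=0}^{i}\pi_j\big(q_j-\tfrac{i+1}{m}\big)_+ +\sum_{j=i+1}^{m}\pi_j\big(\tfrac im-q_j\big)_+\Big),\quad \mathsf{SCDL}(\mathcal D)=\inf_{m\in\{2^1,2^2,\ldots\}}\max\{\mathsf{SCDL}_m(\mathcal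 D),1/m\}.$$ *)

(* Defs.v *)
From HB Require Import structures.
From mathcomp Require Import all_boot all_order all_algebra.
From mathcomp Require Import all_classical all_reals all_analysis.
Set Implicit Arguments. Unset Strict Implicit. Unset Printing Implicit Defensive.
Import Order.TTheory GRing.Theory Num.Theory.
Local Open Scope classical_set_scope.
Local Open Scope ring_scope.

Section SCDL.
Context {R : realType} {d : measure_display} {Omega : measurableType d}.
Variable P : probability Omega R.

Definition posp (x : R) : R := Num.max x 0.

Definition wbin (m i : nat) (p : R) : R := posp (1 - `|m%:R * p - i%:R|).

(* the distribution D of (p, y) is the law of the random pair (p, y) on P;
   expectations E_D[f(p,y)] are integrals w.r.t. P *)
Definition pi_bin (p : Omega -> R) (m i : nat) : R :=
  Rintegral P setT (fun x => wbin m i (p x)).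

Definition q_bin (p y : Omega -> R) (m i : nat) : R :=
  if pi_bin p m i == 0 then 0
  else Rintegral P setT (fun x => wbin m i (p x) * y x) / pi_bin p m i.

Definition SCDL_m (p y : Omega -> R) (m : nat) : R :=
  \big[Num.max/0]_(i < m.+1)
    (\sum_(j < i.+1) pi_bin p m j * posp (q_bin p y m j - i.+1%:R / m%:R)
     + \sum_(i.+1 <= j < m.+1) pi_bin p m j * posp (i%:R / m%:R - q_bin p y m j)).

Definition SCDL (p y : Omega -> R) : R :=
  inf (range (fun k : nat =>
    Num.max (SCDL_m p y (2 ^ k.+1)%N) ((2 ^ k.+1)%N%:R)^-1)).

End SCDL.

(* Main.v *)
Require Import Defs.
From HB Require Import structures.
From mathcomp Require Import all_boot all_order all_algebra.
From mathcomp Require Import all_classical all_reals all_analysis.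
From mathcomp Require Import measurable_realfun.
From mathcomp Require Import ring lra zify.
Import Order.TTheory GRing.Theory Num.Theory.
Local Open Scope classical_set_scope.
Local Open Scope ring_scope.

Section Alg.
Context {R : realType}.

Implicit Types x y t a b u v : R.

Lemma posp_case x : (0 <= x /\ posp x = x) \/ (x <= 0 /\ posp x = 0).
Proof.
rewrite /posp; have [h|h] := lerP 0 x.
  by left.
by right; split => //; exact: ltW.
Qed.

Lemma norm_case x : (0 <= x /\ `|x| = x) \/ (x <= 0 /\ `|x| = - x).
Proof.
have [h|h] := lerP 0 x.
  by left; split => //; rewrite ger0_norm.
by right; split; [exact: ltW| rewrite ltr0_norm].
Qed.

Lemma posp_ge0 x : 0 <= posp x.
Proof. by case: (posp_case x) => -[h ->] //. Qed.

Lemma posp_le x y : x <= y -> posp x <= posp y.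
Proof.
by move=> h; case: (posp_case x) => -[h1 ->]; case: (posp_case y) => -[h2 ->]; lra.
Qed.

Lemma pospD x y : posp (x + y) <= posp x + posp y.
Proof.
by case: (posp_case x) => -[h1 ->]; case: (posp_case y) => -[h2 ->];
  case: (posp_case (x + y)) => -[h3 ->]; lra.
Qed.

Lemma pospZ c x : 0 <= c -> posp (c * x) = c * posp x.
Proof.
move=> c0; case: (posp_case x) => -[h1 ->]; case: (posp_case (c * x)) => -[h3 ->];
  try nra.
Qed.

Lemma posp_lip x y : posp x <= posp y + `|x - y|.
Proof.
by case: (posp_case x) => -[h1 ->]; case: (posp_case y) => -[h2 ->];
  case: (norm_case (x - y)) => -[h3 ->]; lra.
Qed.

Lemma posp_id x : 0 <= x -> posp x = x.
Proof. by case: (posp_case x) => -[h ->] //; lra. Qed.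

Definition hat x := posp (1 - `|x|).

Lemma wbinE m i p : wbin m i p = hat (m%:R * p - i%:R).
Proof. by []. Qed.

Lemma posp0 x : x <= 0 -> posp x = 0.
Proof. by case: (posp_case x) => -[h ->] //; lra. Qed.

End Alg.

Ltac fixabs :=
  repeat match goal with |- context [`|?x|] =>
    first [ rewrite (@ger0_norm _ x); last lra
          | rewrite (@ler0_norm _ x); last lra ] end;
  repeat match goal with |- context [posp ?x] =>
    first [ rewrite (@posp_id _ x); last lra
          | rewrite (@posp0 _ x); last lra ] end.


Section Alg2.
Context {R : realType}.
Implicit Types x y t a b u v : R.

Lemma hat_refine v : hat (v / 2) = hat v + hat (v + 1) / 2 + hat (v - 1) / 2.
Proof.
rewrite /hat.
have [h1|h1] := lerP v (-2); first by fixabs; lra.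
have [h2|h2] := lerP v (-1); first by fixabs; lra.
have [h3|h3] := lerP v 0; first by fixabs; lra.
have [h4|h4] := lerP v 1; first by fixabs; lra.
have [h5|h5] := lerP v 2; first by fixabs; lra.
by fixabs; lra.
Qed.

End Alg2.

Section Vec.
Context {R : realType}.
Implicit Types (x y t a b : R) (pi al : nat -> R).

Definition Phi a b t : R := posp (a - t * b).
Definition Psi a b t : R := posp (t * b - a).

Definition Fv pi al (m i : nat) : R :=
  \sum_(j < i.+1) Phi (al j) (pi j) (i.+1%:R / m%:R)
  + \sum_(i.+1 <= j < m.+1) Psi (al j) (pi j) (i%:R / m%:R).

Definition Sv pi al (m : nat) : R := \big[Num.max/0]_(i < m.+1) Fv pi al m i.

Lemma Phi_ge0 a b t : 0 <= Phi a b t. Proof. exact: posp_ge0. Qed.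
Lemma Psi_ge0 a b t : 0 <= Psi a b t. Proof. exact: posp_ge0. Qed.

Lemma Fv_ge0 pi al m i : 0 <= Fv pi al m i.
Proof. by apply: addr_ge0; apply: sumr_ge0 => j _; apply: posp_ge0. Qed.

Lemma Sv_ge0 pi al m : 0 <= Sv pi al m.
Proof.
rewrite /Sv; elim/big_ind: _ => //.
by move=> x y hx hy; rewrite le_max hx.
move=> i _; exact: Fv_ge0.
Qed.

Lemma Sv_le pi al m X : 0 <= X -> (forall i, (i <= m)%N -> Fv pi al m i <= X) ->
  Sv pi al m <= X.
Proof.
move=> X0 h; rewrite /Sv; elim/big_ind: _ => //.
by move=> x y hx hy; rewrite ge_max hx hy.
by move=> i _; apply: h; rewrite -ltnS.
Qed.

Lemma Fv_le_Sv pi al m i : (i <= m)%N -> Fv pi al m i <= Sv pi al m.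
Proof.
move=> him; rewrite /Sv (bigD1 (Ordinal (him : (i < m.+1)%N))) //=.
by rewrite le_max lexx.
Qed.

Lemma sum_sub (c : nat -> R) lo hi N : (forall j, 0 <= c j) -> (lo <= hi <= N)%N ->
  \sum_(lo <= j < hi) c j <= \sum_(0 <= j < N) c j.
Proof.
move=> c0 /andP[h1 h2].
have h3 := leq_trans h1 h2.
rewrite (@big_cat_nat _ _ _ lo 0 N _ _ (leq0n lo) h3) /=.
rewrite (@big_cat_nat _ _ _ hi lo N _ _ h1 h2) /=.
have A : 0 <= \sum_(0 <= j < lo) c j by apply: sumr_ge0.
have B : 0 <= \sum_(hi <= j < N) c j by apply: sumr_ge0.
lra.
Qed.

Lemma Phi_lip a b a' b' t : 0 <= t -> t <= 2 ->
  Phi a b t <= Phi a' b' t + (`|a - a'| + 2 * `|b - b'|).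
Proof.
move=> t0 t2; rewrite /Phi; apply: le_trans (posp_lip _ (a' - t * b')) _.
rewrite lerD2l.
have -> : a - t * b - (a' - t * b') = (a - a') - t * (b - b') by ring.
apply: le_trans (ler_normB _ _) _; rewrite lerD2l normrM ger0_norm //.
by apply: ler_wpM2r.
Qed.

Lemma Psi_lip a b a' b' t : 0 <= t -> t <= 2 ->
  Psi a b t <= Psi a' b' t + (`|a - a'| + 2 * `|b - b'|).
Proof.
move=> t0 t2; rewrite /Psi; apply: le_trans (posp_lip _ (t * b' - a')) _.
rewrite lerD2l.
have -> : t * b - a - (t * b' - a') = t * (b - b') - (a - a') by ring.
apply: le_trans (ler_normB _ _) _; rewrite addrC lerD2l normrM ger0_norm //.
by apply: ler_wpM2r.
Qed.

Lemma thr_bnd (i m : nat) : (0 < m)%N -> (i <= m)%N ->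
  0 <= i.+1%:R / m%:R :> R /\ i.+1%:R / m%:R <= 2 :> R /\
  0 <= i%:R / m%:R :> R /\ i%:R / m%:R <= 1 :> R.
Proof.
move=> m0 im.
have mR : (0 : R) < m%:R by rewrite ltr0n.
have imR : (i%:R : R) <= m%:R by rewrite ler_nat.
have m1 : (1 : R) <= m%:R by rewrite ler1n.
split; first by apply: divr_ge0.
have iS : (i.+1%:R : R) = i%:R + 1 by rewrite -addn1 natrD.
split; first by rewrite ler_pdivrMr // iS; lra.
split; first by apply: divr_ge0.
by rewrite ler_pdivrMr //; lra.
Qed.

Lemma Sv_lip pi al pi' al' m : (0 < m)%N ->
  Sv pi al m <= Sv pi' al' m +
    2 * \sum_(0 <= j < m.+1) (`|al j - al' j| + 2 * `|pi j - pi' j|).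
Proof.
move=> m0; set C := \sum_(0 <= j < _) _.
have C0 : 0 <= C by apply: sumr_ge0 => j _; apply: addr_ge0 => //; apply: mulr_ge0.
apply: Sv_le; first by apply: addr_ge0; [exact: Sv_ge0| apply: mulr_ge0].
move=> i im; apply: (@le_trans _ _ (Fv pi' al' m i + 2 * C)); last first.
  by rewrite lerD2r; apply: Fv_le_Sv.
have [t1 [t2 [t3 t4]]] := thr_bnd i m m0 im.
have cge0 : forall j, 0 <= `|al j - al' j| + 2 * `|pi j - pi' j| :> R.
  by move=> j; apply: addr_ge0 => //; apply: mulr_ge0.
rewrite /Fv mulr2n mulrDl mul1r addrACA; apply: lerD.
  apply: le_trans (_ : _ <= \sum_(j < i.+1) (Phi (al' j) (pi' j) (i.+1%:R / m%:R)
     + (`|al j - al' j| + 2 * `|pi j - pi' j|))) _.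
    by apply: ler_sum => j _; apply: Phi_lip.
  rewrite big_split lerD2l /= -(big_mkord xpredT (fun j => `|al j - al' j| + 2 * `|pi j - pi' j|)).
  by apply: sum_sub => //; rewrite leq0n /= ltnS.
apply: le_trans (_ : _ <= \sum_(i.+1 <= j < m.+1) (Psi (al' j) (pi' j) (i%:R / m%:R)
     + (`|al j - al' j| + 2 * `|pi j - pi' j|))) _.
  apply: ler_sum => j _; apply: Psi_lip => //; lra.
rewrite big_split lerD2l /=.
by apply: sum_sub => //; rewrite ltnS im leqnn.
Qed.

Lemma Sv_le1 pi al m : (0 < m)%N -> (forall j, 0 <= al j <= pi j) ->
  \sum_(0 <= j < m.+1) pi j <= 1 -> Sv pi al m <= 1.
Proof.
move=> m0 hj hs; apply: Sv_le => // i im.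
have [t1 [t2 [t3 t4]]] := thr_bnd i m m0 im.
apply: le_trans hs; rewrite (@big_cat_nat _ _ _ i.+1 0 m.+1 _ _ (leq0n i.+1) im) /=.
rewrite /Fv big_mkord; apply: lerD; apply: ler_sum => j _; rewrite /Phi /Psi.
  have [h1 h2] := andP (hj j).
  case: (posp_case (al j - i.+1%:R / m%:R * pi j)) => -[h ->]; nra.
have [h1 h2] := andP (hj j).
case: (posp_case (i%:R / m%:R * pi j - al j)) => -[h ->]; nra.
Qed.

End Vec.

Section Mono.
Context {R : realType}.
Implicit Types (x y t a b : R) (pi al : nat -> R).

Lemma Phi_split a0 a1 a2 b0 b1 b2 t :
  Phi (a0 + a1 / 2 + a2 / 2) (b0 + b1 / 2 + b2 / 2) t <=
  Phi a0 b0 t + Phi a1 b1 t / 2 + Phi a2 b2 t / 2.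
Proof.
rewrite /Phi.
have -> : a0 + a1 / 2 + a2 / 2 - t * (b0 + b1 / 2 + b2 / 2) =
   (a0 - t * b0) + (1/2) * (a1 - t * b1) + (1/2) * (a2 - t * b2) by ring.
apply: le_trans (pospD _ _) _; rewrite pospZ; last lra.
apply: lerD; last lra.
apply: le_trans (pospD _ _) _; rewrite pospZ; last lra.
lra.
Qed.

Lemma Psi_split a0 a1 a2 b0 b1 b2 t :
  Psi (a0 + a1 / 2 + a2 / 2) (b0 + b1 / 2 + b2 / 2) t <=
  Psi a0 b0 t + Psi a1 b1 t / 2 + Psi a2 b2 t / 2.
Proof.
rewrite /Psi.
have -> : t * (b0 + b1 / 2 + b2 / 2) - (a0 + a1 / 2 + a2 / 2) =
   (t * b0 - a0) + (1/2) * (t * b1 - a1) + (1/2) * (t * b2 - a2) by ring.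
apply: le_trans (pospD _ _) _; rewrite pospZ; last lra.
apply: lerD; last lra.
apply: le_trans (pospD _ _) _; rewrite pospZ; last lra.
lra.
Qed.

Lemma Phi_anti a b t t' : 0 <= b -> t <= t' -> Phi a b t' <= Phi a b t.
Proof. by move=> b0 tt; apply: posp_le; nra. Qed.

Lemma Psi_mono a b t t' : 0 <= b -> t <= t' -> Psi a b t <= Psi a b t'.
Proof. by move=> b0 tt; apply: posp_le; nra. Qed.

Lemma Phi00 t : Phi 0 0 t = 0.
Proof. by rewrite /Phi mulr0 subr0 posp_id. Qed.
Lemma Psi00 t : Psi 0 0 t = 0.
Proof. by rewrite /Psi mulr0 subr0 posp_id. Qed.

Definition gx (X : nat -> R) (j : nat) : R := if j is j'.+1 then X j'.*2.+1 else 0.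

Lemma sumL (X : nat -> R) n :
  \sum_(j < n.+1) (X j.*2 + X j.*2.+1 / 2 + gx X j / 2) =
  \sum_(k < n.*2.+1) X k + X n.*2.+1 / 2.
Proof.
elim: n => [|n IH].
  by rewrite !big_ord_recr !big_ord0 /= !add0r mul0r addr0.
rewrite big_ord_recr /= IH.
rewrite (big_ord_recr n.*2.+2) (big_ord_recr n.*2.+1) /=.
lra.
Qed.

Lemma sumU (Y : nat -> R) i d :
  \sum_(i.+1 <= j < (i + d).+1) (Y j.*2 + Y j.*2.+1 / 2 + gx Y j / 2) =
  \sum_(i.*2.+1 <= k < (i + d).*2.+1) Y k - Y i.*2.+1 / 2 + Y (i + d).*2.+1 / 2.
Proof.
elim: d => [|d IH].
  by rewrite addn0 !big_geq // subrK.
rewrite addnS big_nat_recr /=; last by rewrite ltnS leq_addr.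
rewrite IH doubleS.
rewrite (@big_nat_recr _ _ _ (i + d).*2.+2); last lia.
rewrite (@big_nat_recr _ _ _ (i + d).*2.+1); last lia.
rewrite /=. lra.
Qed.

End Mono.

Section Mono2.
Context {R : realType}.
Implicit Types (x y t a b : R) (pi al : nat -> R).

Lemma thr_fine (i m : nat) : (0 < m)%N ->
  (i.*2).+1%:R / (m.*2)%:R <= i.+1%:R / m%:R :> R /\
  (i.*2)%:R / (m.*2)%:R = i%:R / m%:R :> R /\
  (i.*2.+1).+1%:R / (m.*2)%:R = i.+1%:R / m%:R :> R /\
  i%:R / m%:R <= (i.*2.+1)%:R / (m.*2)%:R :> R.
Proof.
move=> m0.
have mR : (0 : R) < m%:R by rewrite ltr0n.
have mn : (m%:R : R) != 0 by rewrite gt_eqF.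
have e2 : forall n, (n.*2%:R : R) = 2 * n%:R by move=> n; rewrite -mul2n natrM.
have eS : forall n, (n.+1%:R : R) = n%:R + 1 by move=> n; rewrite -addn1 natrD.
rewrite !eS !e2 eS.
set x := (i%:R : R); set y := (m%:R : R).
split.
  have -> : (x + 1) / y = (2 * x + 1) / (2 * y) + 1 / (2 * y) by field.
  by rewrite lerDl; apply: divr_ge0 => //; lra.
split; first by field.
split; first by field.
have -> : (2 * x + 1) / (2 * y) = x / y + 1 / (2 * y) by field.
by rewrite lerDl; apply: divr_ge0 => //; lra.
Qed.

Lemma Sv_mono pi al pi' al' m : (0 < m)%N -> (forall k, 0 <= pi' k) ->
  pi' m.*2.+1 = 0 -> al' m.*2.+1 = 0 ->
  (forall j, (j <= m)%N -> pi j = pi' j.*2 + pi' j.*2.+1 / 2 + gx pi' j / 2) ->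
  (forall j, (j <= m)%N -> al j = al' j.*2 + al' j.*2.+1 / 2 + gx al' j / 2) ->
  Sv pi al m <= Sv pi' al' m.*2.
Proof.
move=> m0 pi'0 pz az hpi hal.
apply: Sv_le; first exact: Sv_ge0.
move=> i im.
have [f1 [f2 [f3 f4]]] := thr_fine i m m0.
set T := i.+1%:R / m%:R in f1 f3 *.
set t := i%:R / m%:R in f2 f4 *.
pose X k := Phi (al' k) (pi' k) T.
pose Y k := Psi (al' k) (pi' k) t.
have gX : forall j, Phi (gx al' j) (gx pi' j) T = gx X j.
  by case=> [|j] //=; rewrite Phi00.
have gY : forall j, Psi (gx al' j) (gx pi' j) t = gx Y j.
  by case=> [|j] //=; rewrite Psi00.
have L : \sum_(j < i.+1) Phi (al j) (pi j) T <= \sum_(k < i.*2.+1) X k + X i.*2.+1 / 2.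
  rewrite -sumL; apply: ler_sum => j _.
  have jm : (j <= m)%N by have := ltn_ord j; lia.
  by rewrite hpi // hal // -gX; apply: Phi_split.
have U : \sum_(i.+1 <= j < (i + (m - i)).+1) Psi (al j) (pi j) t <=
    \sum_(i.*2.+1 <= k < (i + (m - i)).*2.+1) Y k - Y i.*2.+1 / 2 + Y (i + (m - i)).*2.+1 / 2.
  rewrite -sumU; apply: ler_sum_nat => j /andP[j1 j2].
  have jm' : (j <= m)%N by lia.
  by rewrite hpi // hal // -gY; apply: Psi_split.
rewrite subnKC // in U.
have Y0 : Y m.*2.+1 = 0 by rewrite /Y pz az Psi00.
have X0 : forall k, 0 <= X k by move=> k; apply: Phi_ge0.
have Yg0 : forall k, 0 <= Y k by move=> k; apply: Psi_ge0.
have F0 : \sum_(k < i.*2.+1) X k + \sum_(i.*2.+1 <= k < m.*2.+1) Y k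
     <= Fv pi' al' m.*2 i.*2.
  rewrite /Fv; apply: lerD.
    by apply: ler_sum => k _; apply: Phi_anti.
  by rewrite f2.
have F0S : Fv pi' al' m.*2 i.*2 <= Sv pi' al' m.*2.
  by apply: Fv_le_Sv; lia.
have [ilt|ieq] := ltnP i m; last first.
  have eim : i = m by lia.
  have X1 : X i.*2.+1 = 0 by rewrite /X eim pz az Phi00.
  rewrite /Fv; apply: le_trans F0S; apply: le_trans F0.
  rewrite big_geq; last by lia.
  rewrite big_geq; last by lia.
  rewrite addr0; apply: le_trans L _; rewrite X1 mul0r addr0 lexx //.
have F1 : \sum_(k < i.*2.+2) X k + \sum_(i.*2.+2 <= k < m.*2.+1) Y k
     <= Fv pi' al' m.*2 i.*2.+1.
  rewrite /Fv; apply: lerD.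
    by apply: ler_sum => k _; rewrite /X f3.
  by apply: ler_sum_nat => k _; apply: Psi_mono.
have F1S : Fv pi' al' m.*2 i.*2.+1 <= Sv pi' al' m.*2.
  by apply: Fv_le_Sv; lia.
rewrite big_ord_recr /= in F1.
rewrite (@big_ltn _ _ _ i.*2.+1) in F0 U; last lia.
rewrite /Fv -/T -/t.
have := Yg0 i.*2.+1. have := X0 i.*2.+1.
lra.
Qed.

End Mono2.

Section Integ.
Context {R : realType} {d : measure_display} {Omega : measurableType d}.
Variable P : probability Omega R.

Lemma Pfin : (P setT < +oo)%E.
Proof. by rewrite probability_setT ltey. Qed.

Lemma PsetT1 : fine (P setT) = 1 :> R.
Proof. by rewrite probability_setT. Qed.

Lemma int_bnd (f : Omega -> R) (M : R) : measurable_fun setT f ->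
  (forall x, `|f x| <= M) -> P.-integrable setT (EFin \o f).
Proof.
move=> mf fM; apply: measurable_bounded_integrable => //; first exact: Pfin.
exists M; split; first exact: num_real.
by move=> M' hM' x _ /=; apply: le_trans (fM x) (ltW hM').
Qed.

Lemma Rint_cst (c : R) : Rintegral P setT (fun=> c) = c.
Proof. by rewrite Rintegral_cst // PsetT1 mulr1. Qed.

Lemma mwbin m j : measurable_fun setT (wbin m j : R -> R).
Proof.
rewrite /wbin /posp.
apply: measurable_maxr; last exact: measurable_cst.
apply: measurable_funB; first exact: measurable_cst.
apply: measurableT_comp; first exact: normr_measurable.
apply: measurable_funB; last exact: measurable_cst.
exact: mulrl_measurable.
Qed.

End Integ.

Section Point.
Context {R : realType}.

Lemma e2R n : (n.*2%:R : R) = 2 * n%:R.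
Proof. by rewrite -mul2n natrM. Qed.
Lemma eSR n : (n.+1%:R : R) = n%:R + 1.
Proof. by rewrite -addn1 natrD. Qed.

Lemma hat_ge0 (u : R) : 0 <= hat u. Proof. exact: posp_ge0. Qed.
Lemma hat_le1 (u : R) : hat u <= 1.
Proof. rewrite /hat; case: (posp_case (1 - `|u|)) => -[h ->] //; lra. Qed.
Lemma hat0 (u : R) : 1 <= `|u| -> hat u = 0.
Proof. by move=> h; rewrite /hat posp0 //; lra. Qed.
Lemma hat_lip (u v : R) : `|hat u - hat v| <= `|u - v|.
Proof.
rewrite /hat; have h1 := posp_lip (1 - `|u|) (1 - `|v|).
have h2 := posp_lip (1 - `|v|) (1 - `|u|).
have h3 := ler_dist_dist u v.
have h4 : `|1 - `|u| - (1 - `|v|)| = `| `|u| - `|v| |.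
  by rewrite distrC; congr `|_|; ring.
have h5 : `|1 - `|v| - (1 - `|u|)| = `| `|u| - `|v| | by congr `|_|; ring.
rewrite h4 in h1; rewrite h5 in h2.
case: (norm_case (posp (1 - `|u|) - posp (1 - `|v|))) => -[h ->]; lra.
Qed.

Lemma wbin_refine m j (q : R) : 0 <= q ->
  wbin m j q = wbin m.*2 j.*2 q + wbin m.*2 j.*2.+1 q / 2
               + gx (fun k => wbin m.*2 k q) j / 2.
Proof.
move=> q0; rewrite !wbinE.
have h := hat_refine (m.*2%:R * q - j.*2%:R).
have e1 : (m.*2%:R * q - j.*2%:R) / 2 = m%:R * q - j%:R :> R.
  by rewrite !e2R; field.
have e3 : m.*2%:R * q - j.*2%:R - 1 = m.*2%:R * q - j.*2.+1%:R :> R.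
  by rewrite (eSR j.*2); ring.
rewrite e1 e3 in h; rewrite h.
suff hg : hat (m.*2%:R * q - j.*2%:R + 1) = gx (fun k => wbin m.*2 k q) j.
  by rewrite hg; ring.
case: j {e1 e3 h} => [|j] /=.
  have : 0 <= 2 * m%:R * q :> R by apply: mulr_ge0 => //; apply: mulr_ge0.
  move=> h0; apply: hat0; rewrite e2R subr0 ger0_norm; lra.
rewrite wbinE; congr hat.
rewrite doubleS (eSR j.*2.+1) (eSR j.*2); ring.
Qed.

Lemma wbin_top m (q : R) : q <= 1 -> wbin m.*2 m.*2.+1 q = 0.
Proof.
move=> q1; rewrite wbinE hat0 // eSR.
have h : m.*2%:R * q <= m.*2%:R :> R.
  by rewrite -[leRHS]mulr1 ler_wpM2l.
rewrite ler0_norm; lra.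
Qed.

Lemma wbin_supp m j (q : R) : 0 <= q ->
  j != Num.Def.trunc (m%:R * q) -> j != (Num.Def.trunc (m%:R * q)).+1 -> wbin m j q = 0.
Proof.
move=> q0 h1 h2; set k := Num.Def.trunc (m%:R * q) in h1 h2.
have mq0 : 0 <= m%:R * q :> R by apply: mulr_ge0.
have /andP[k1 k2] := truncn_itv mq0; rewrite -/k in k1 k2.
rewrite wbinE; apply: hat0.
have [jk|jk] : (j.+1 <= k)%N \/ (k.+2 <= j)%N by move/eqP: h1; move/eqP: h2; lia.
  have := jk; rewrite -(ler_nat R) eSR => jk'.
  rewrite ger0_norm; lra.
have := jk; rewrite -(ler_nat R) !eSR => jk'.
rewrite eSR in k2; rewrite ler0_norm; lra.
Qed.

Lemma sum_ind (c N : nat) (A : R) : 0 <= A ->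
  \sum_(0 <= j < N) (if j == c then A else 0) <= A.
Proof.
move=> A0; rewrite big_mkord -big_mkcond /=.
rewrite (big_ord1_eq _ (fun=> A)); by case: ifP.
Qed.

Lemma sumw_le1 m N (q : R) : 0 <= q ->
  \sum_(0 <= j < N) wbin m j q <= 1.
Proof.
move=> q0; set k := Num.Def.trunc (m%:R * q).
have mq0 : 0 <= m%:R * q :> R by apply: mulr_ge0.
have /andP[k1 k2] := truncn_itv mq0; rewrite -/k in k1 k2.
apply: le_trans (_ : _ <= \sum_(0 <= j < N) ((if j == k then wbin m k q else 0)
    + (if j == k.+1 then wbin m k.+1 q else 0))) _.
  apply: ler_sum => j _.
  case: (eqVneq j k) => [->|jk].
    by rewrite (_ : (k == k.+1) = false) ?addr0 //; lia.
  case: (eqVneq j k.+1) => [->|jk1]; first by rewrite add0r.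
  by rewrite add0r (wbin_supp m j q q0 jk jk1).
rewrite big_split /=.
apply: le_trans (lerD (sum_ind _ _ _ (hat_ge0 _)) (sum_ind _ _ _ (hat_ge0 _))) _.
rewrite ?wbinE /hat eSR; rewrite eSR in k2.
fixabs; lra.
Qed.

Lemma sumdw m N (q q' : R) : 0 <= q -> 0 <= q' ->
  \sum_(0 <= j < N) `|wbin m j q - wbin m j q'| <= 4 * (m%:R * `|q - q'|).
Proof.
move=> q0 q'0; set k := Num.Def.trunc (m%:R * q); set k' := Num.Def.trunc (m%:R * q').
set D := m%:R * `|q - q'|.
have D0 : 0 <= D by apply: mulr_ge0.
have hD : forall j, `|wbin m j q - wbin m j q'| <= D.
  move=> j; rewrite !wbinE; apply: le_trans (hat_lip _ _) _.
  rewrite (_ : _ - _ = m%:R * (q - q')); last by ring.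
  by rewrite normrM ger0_norm.
apply: le_trans (_ : _ <= \sum_(0 <= j < N) ((if j == k then D else 0)
    + (if j == k.+1 then D else 0) + (if j == k' then D else 0)
    + (if j == k'.+1 then D else 0))) _.
  apply: ler_sum => j _.
  have g : forall c, 0 <= (if j == c then D else 0) by move=> c; case: ifP.
  have := g k; have := g k.+1; have := g k'; have := g k'.+1.
  case: (eqVneq j k) => [->|jk]; first by have := hD k; lra.
  case: (eqVneq j k.+1) => [->|jk1]; first by have := hD k.+1; lra.
  case: (eqVneq j k') => [->|jk']; first by have := hD k'; lra.
  case: (eqVneq j k'.+1) => [->|jk'1]; first by have := hD k'.+1; lra.
  rewrite (wbin_supp m j q q0 jk jk1) (wbin_supp m j q' q'0 jk' jk'1) subr0 normr0; lra.
rewrite !big_split /=.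
have := sum_ind k N D D0; have := sum_ind k.+1 N D D0;
have := sum_ind k' N D D0; have := sum_ind k'.+1 N D D0.
lra.
Qed.

End Point.

Section Integ2.
Context {R : realType} {d : measure_display} {Omega : measurableType d}.
Variable P : probability Omega R.

Definition pv (p : Omega -> R) m j := pi_bin P p m j.
Definition av (p y : Omega -> R) m j :=
  Rintegral P setT (fun x => wbin m j (p x) * y x).

Lemma wbin_ge0 m j (q : R) : 0 <= wbin m j q.
Proof. exact: posp_ge0. Qed.
Lemma wbin_le1 m j (q : R) : wbin m j q <= 1.
Proof. exact: hat_le1. Qed.
Lemma wbin_norm m j (q : R) : `|wbin m j q| <= 1.
Proof. by rewrite ger0_norm ?wbin_le1 ?wbin_ge0. Qed.

Variables (p y : Omega -> R).
Hypothesis mp : measurable_fun setT p.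
Hypothesis my : measurable_fun setT y.
Hypothesis p01 : forall x, 0 <= p x <= 1.
Hypothesis y01 : forall x, y x = 0 \/ y x = 1.

Lemma y_ge0 x : 0 <= y x. Proof. by case: (y01 x) => ->. Qed.
Lemma y_le1 x : y x <= 1. Proof. by case: (y01 x) => ->. Qed.
Lemma y_norm x : `|y x| <= 1. Proof. by case: (y01 x) => ->; rewrite ?normr0 ?normr1. Qed.

Lemma mw m j : measurable_fun setT (fun x => wbin m j (p x)).
Proof. exact: (measurableT_comp (mwbin m j) mp). Qed.

Lemma iw m j : P.-integrable setT (EFin \o (fun x => wbin m j (p x))).
Proof. by apply: (int_bnd P _ 1) => [|x]; [exact: mw| exact: wbin_norm]. Qed.

Lemma mwy m j : measurable_fun setT (fun x => wbin m j (p x) * y x).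
Proof. exact: measurable_funM (mw m j) my. Qed.

Lemma iwy m j : P.-integrable setT (EFin \o (fun x => wbin m j (p x) * y x)).
Proof.
apply: (int_bnd P _ 1) => [|x]; first exact: mwy.
rewrite normrM -[1]mulr1; apply: ler_pM => //; [exact: wbin_norm| exact: y_norm].
Qed.

Lemma pv_ge0 m j : 0 <= pv p m j.
Proof. by apply: Rintegral_ge0 => x _; exact: wbin_ge0. Qed.

Lemma av_ge0 m j : 0 <= av p y m j.
Proof. by apply: Rintegral_ge0 => x _; apply: mulr_ge0; [exact: wbin_ge0| exact: y_ge0]. Qed.

Lemma av_le_pv m j : av p y m j <= pv p m j.
Proof.
apply: le_Rintegral => //; [exact: iwy| exact: iw| move=> x _].
rewrite -[leRHS]mulr1; apply: ler_wpM2l; [exact: wbin_ge0| exact: y_le1].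
Qed.

Lemma term_eq (a b t : R) : 0 <= a <= b ->
  b * posp ((if b == 0 then 0 else a / b) - t) = Phi a b t /\
  b * posp (t - (if b == 0 then 0 else a / b)) = Psi a b t.
Proof.
move=> /andP[a0 ab]; case: (eqVneq b 0) => [b0|b0].
  have a00 : a = 0 by rewrite b0 in ab; lra.
  by rewrite b0 a00 !mul0r Phi00 Psi00; split.
have bp : 0 < b by rewrite lt_def b0 /=; apply: le_trans ab.
rewrite /Phi /Psi -!pospZ; try exact: ltW.
by split; congr posp; field.
Qed.

Lemma SCDLm_eq m : SCDL_m P p y m = Sv (pv p m) (av p y m) m.
Proof.
rewrite /SCDL_m /Sv; apply: eq_bigr => i _; rewrite /Fv.
have h : forall j, 0 <= av p y m j <= pv p m j.
  by move=> j; rewrite av_ge0 av_le_pv.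
congr (_ + _); apply: eq_bigr => j _.
  by have [-> _] := term_eq _ _ (i.+1%:R / m%:R) (h j).
by have [_ ->] := term_eq _ _ (i%:R / m%:R) (h j).
Qed.

Definition bm (f : Omega -> R) :=
  measurable_fun setT f /\ exists M, forall x, `|f x| <= M.

Lemma bm_int f : bm f -> P.-integrable setT (EFin \o f).
Proof. by case=> mf [M hM]; apply: (int_bnd P _ M). Qed.

Lemma bmD f g : bm f -> bm g -> bm (fun x => f x + g x).
Proof.
case=> mf [M hM] [mg [N hN]]; split; first exact: measurable_funD.
by exists (M + N) => x; apply: le_trans (ler_normD _ _) _; apply: lerD.
Qed.

Lemma bmB f g : bm f -> bm g -> bm (fun x => f x - g x).
Proof.
case=> mf [M hM] [mg [N hN]]; split; first exact: measurable_funB.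
by exists (M + N) => x; apply: le_trans (ler_normB _ _) _; apply: lerD.
Qed.

Lemma bmM f g : bm f -> bm g -> bm (fun x => f x * g x).
Proof.
case=> mf [M hM] [mg [N hN]]; split; first exact: measurable_funM.
exists (M * N) => x; rewrite normrM; apply: ler_pM => //.
Qed.

Lemma bm_cst c : bm (fun=> c).
Proof. by split; [exact: measurable_cst| exists `|c|]. Qed.

Lemma bm_norm f : bm f -> bm (fun x => `|f x|).
Proof.
case=> mf [M hM]; split; first by apply: measurableT_comp => //; exact: normr_measurable.
by exists M => x; rewrite normr_id.
Qed.

Lemma bm_w m j : bm (fun x => wbin m j (p x)).
Proof. by split; [exact: mw| exists 1 => x; exact: wbin_norm]. Qed.

Lemma bm_y : bm y.
Proof. by split => //; exists 1 => x; exact: y_norm. Qed.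

Lemma bm_p : bm p.
Proof.
split => //; exists 1 => x; have /andP[h1 h2] := p01 x.
by rewrite ger0_norm.
Qed.

Lemma Rint_lin3 (f0 f1 f2 : Omega -> R) : bm f0 -> bm f1 -> bm f2 ->
  Rintegral P setT (fun x => f0 x + f1 x / 2 + f2 x / 2) =
  Rintegral P setT f0 + Rintegral P setT f1 / 2 + Rintegral P setT f2 / 2.
Proof.
move=> b0 b1 b2.
have b1' := bmM _ _ b1 (bm_cst 2^-1); have b2' := bmM _ _ b2 (bm_cst 2^-1).
rewrite RintegralD //; [|exact: bm_int _ (bmD _ _ b0 b1')| exact: bm_int].
rewrite RintegralD //; [|exact: bm_int| exact: bm_int].
by rewrite !RintegralZr //; exact: bm_int.
Qed.

Lemma Rint_gx (F : nat -> Omega -> R) j :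
  Rintegral P setT (fun x => gx (fun k => F k x) j) = gx (fun k => Rintegral P setT (F k)) j.
Proof. by case: j => [|j] //=; rewrite Rint_cst. Qed.

Lemma bm_gx (F : nat -> Omega -> R) j : (forall k, bm (F k)) -> bm (fun x => gx (fun k => F k x) j).
Proof. by case: j => [|j] /= h; [exact: bm_cst| exact: h]. Qed.

Lemma pv_refine m j :
  pv p m j = pv p m.*2 j.*2 + pv p m.*2 j.*2.+1 / 2 + gx (pv p m.*2) j / 2.
Proof.
rewrite /pv /pi_bin.
rewrite (@eq_Rintegral _ _ _ P setT (fun x => wbin m.*2 j.*2 (p x) + wbin m.*2 j.*2.+1 (p x) / 2
   + gx (fun k => wbin m.*2 k (p x)) j / 2)); last first.
  by move=> x _; apply: wbin_refine; have /andP[] := p01 x.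
rewrite Rint_lin3; [|exact: bm_w| exact: bm_w| exact: bm_gx _ _ (fun k => bm_w _ k)].
by rewrite (Rint_gx (fun k x => wbin m.*2 k (p x))).
Qed.

Lemma av_refine m j :
  av p y m j = av p y m.*2 j.*2 + av p y m.*2 j.*2.+1 / 2 + gx (av p y m.*2) j / 2.
Proof.
rewrite /av.
rewrite (@eq_Rintegral _ _ _ P setT (fun x => wbin m.*2 j.*2 (p x) * y x
   + wbin m.*2 j.*2.+1 (p x) * y x / 2
   + gx (fun k => wbin m.*2 k (p x) * y x) j / 2)); last first.
  move=> x _; rewrite wbin_refine; last by have /andP[] := p01 x.
  by case: j => [|j] /=; ring.
rewrite Rint_lin3; [|exact: bmM _ _ (bm_w _ _) bm_y| exact: bmM _ _ (bm_w _ _) bm_y|].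
  by rewrite (Rint_gx (fun k x => wbin m.*2 k (p x) * y x)).
exact: bm_gx _ _ (fun k => bmM _ _ (bm_w _ k) bm_y).
Qed.

Lemma pv_top m : pv p m.*2 m.*2.+1 = 0.
Proof.
rewrite /pv /pi_bin (@eq_Rintegral _ _ _ P setT (fun=> 0)) ?Rint_cst //.
by move=> x _; apply: wbin_top; have /andP[] := p01 x.
Qed.

Lemma av_top m : av p y m.*2 m.*2.+1 = 0.
Proof.
rewrite /av (@eq_Rintegral _ _ _ P setT (fun=> 0)) ?Rint_cst //.
by move=> x _; rewrite wbin_top ?mul0r //; have /andP[] := p01 x.
Qed.

End Integ2.

Section Lip.
Context {R : realType} {d : measure_display} {Omega : measurableType d}.
Variable P : probability Omega R.

Lemma bm_sum (F : nat -> Omega -> R) n : (forall j, bm (F j)) ->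
  bm (fun x => \sum_(0 <= j < n) F j x).
Proof.
move=> hF; elim: n => [|n IH].
  rewrite (_ : (fun x => _) = fun=> 0); first exact: bm_cst.
  by apply/funext => x; rewrite big_geq.
rewrite (_ : (fun x => _) = fun x => \sum_(0 <= j < n) F j x + F n x).
  exact: bmD.
by apply/funext => x; rewrite big_nat_recr.
Qed.

Lemma Rint_sum (F : nat -> Omega -> R) n : (forall j, bm (F j)) ->
  Rintegral P setT (fun x => \sum_(0 <= j < n) F j x) =
  \sum_(0 <= j < n) Rintegral P setT (F j).
Proof.
move=> hF; elim: n => [|n IH].
  rewrite big_geq // (_ : (fun x => _) = fun=> 0) ?Rint_cst //.
  by apply/funext => x; rewrite big_geq.
rewrite (_ : (fun x => _) = fun x => \sum_(0 <= j < n) F j x + F n x); last first.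
  by apply/funext => x; rewrite big_nat_recr.
rewrite RintegralD //; [|exact: bm_int (bm_sum _ _ hF)| exact: bm_int].
by rewrite IH big_nat_recr.
Qed.

Variables (p1 p2 y : Omega -> R).
Hypothesis mp1 : measurable_fun setT p1.
Hypothesis mp2 : measurable_fun setT p2.
Hypothesis my : measurable_fun setT y.
Hypothesis p01_1 : forall x, 0 <= p1 x <= 1.
Hypothesis p01_2 : forall x, 0 <= p2 x <= 1.
Hypothesis y01 : forall x, y x = 0 \/ y x = 1.

Lemma sum_pv_le1 m : \sum_(0 <= j < m.+1) pv P p1 m j <= 1.
Proof.
rewrite /pv /pi_bin -(Rint_sum (fun j x => wbin m j (p1 x))); last first.
  by move=> j; exact: bm_w.
rewrite -(Rint_cst P 1); apply: le_Rintegral => //.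
- exact: bm_int (bm_sum _ _ (fun j => bm_w _ mp1 _ _)).
- exact: bm_int (bm_cst _).
- by move=> x _; apply: sumw_le1; have /andP[] := p01_1 x.
Qed.

Definition E12 := Rintegral P setT (fun x => `|p1 x - p2 x|).

Lemma E12_ge0 : 0 <= E12.
Proof. by apply: Rintegral_ge0. Qed.

Lemma dpv m j : `|pv P p1 m j - pv P p2 m j| <=
  Rintegral P setT (fun x => `|wbin m j (p1 x) - wbin m j (p2 x)|).
Proof.
rewrite /pv /pi_bin -RintegralB //; [|exact: bm_int (bm_w _ mp1 _ _)| exact: bm_int (bm_w _ mp2 _ _)].
apply: le_normr_Rintegral => //.
exact: bm_int (bmB _ _ (bm_w _ mp1 _ _) (bm_w _ mp2 _ _)).
Qed.

Lemma dav m j : `|av P p1 y m j - av P p2 y m j| <=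
  Rintegral P setT (fun x => `|wbin m j (p1 x) - wbin m j (p2 x)|).
Proof.
have by' := bm_y _ my y01.
rewrite /av -RintegralB //; [|exact: bm_int (bmM _ _ (bm_w _ mp1 _ _) by')
   | exact: bm_int (bmM _ _ (bm_w _ mp2 _ _) by')].
apply: le_trans; first (apply: le_normr_Rintegral => //;
  exact: bm_int (bmB _ _ (bmM _ _ (bm_w _ mp1 _ _) by') (bmM _ _ (bm_w _ mp2 _ _) by'))).
apply: le_Rintegral => //.
- exact: bm_int (bm_norm _ (bmB _ _ (bmM _ _ (bm_w _ mp1 _ _) by') (bmM _ _ (bm_w _ mp2 _ _) by'))).
- exact: bm_int (bm_norm _ (bmB _ _ (bm_w _ mp1 _ _) (bm_w _ mp2 _ _))).
move=> x _; rewrite -mulrBl normrM -[leRHS]mulr1; apply: ler_wpM2l => //.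
case: (y01 x) => ->; by rewrite ?normr0 ?normr1.
Qed.

Lemma lipsum m :
  \sum_(0 <= j < m.+1) (`|av P p1 y m j - av P p2 y m j| + 2 * `|pv P p1 m j - pv P p2 m j|)
  <= 12 * m%:R * E12.
Proof.
pose G j x := `|wbin m j (p1 x) - wbin m j (p2 x)|.
have bG : forall j, bm (G j).
  by move=> j; exact: bm_norm _ (bmB _ _ (bm_w _ mp1 _ _) (bm_w _ mp2 _ _)).
apply: le_trans (_ : _ <= \sum_(0 <= j < m.+1) (3 * Rintegral P setT (G j))) _.
  apply: ler_sum_nat => j _.
  have := dav m j; have := dpv m j; rewrite -/(G j); lra.
rewrite -mulr_sumr -Rint_sum //.
rewrite (_ : 12 * m%:R * E12 = 3 * (4 * (m%:R * E12))); last by ring.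
apply: ler_wpM2l => //; rewrite /E12.
rewrite -RintegralZl //; last exact: bm_int (bm_norm _ (bmB _ _ (bm_p _ mp1 p01_1) (bm_p _ mp2 p01_2))).
rewrite -RintegralZl //; last first.
  exact: bm_int (bmM _ _ (bm_cst _) (bm_norm _ (bmB _ _ (bm_p _ mp1 p01_1) (bm_p _ mp2 p01_2)))).
apply: le_Rintegral => //.
- exact: bm_int (bm_sum _ _ bG).
- exact: bm_int (bmM _ _ (bm_cst _) (bmM _ _ (bm_cst _) (bm_norm _ (bmB _ _ (bm_p _ mp1 p01_1) (bm_p _ mp2 p01_2))))).
move=> x _; apply: sumdw.
  by have /andP[] := p01_1 x.
by have /andP[] := p01_2 x.
Qed.

End Lip.

Section SC.
Context {R : realType} {d : measure_display} {Omega : measurableType d}.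
Variable P : probability Omega R.
Variables (p y : Omega -> R).
Hypothesis mp : measurable_fun setT p.
Hypothesis my : measurable_fun setT y.
Hypothesis p01 : forall x, 0 <= p x <= 1.
Hypothesis y01 : forall x, y x = 0 \/ y x = 1.

Definition Mk (k : nat) : nat := (2 ^ k.+1)%N.
Definition sv k := Sv (pv P p (Mk k)) (av P p y (Mk k)) (Mk k).
Definition fk k := Num.max (SCDL_m P p y (Mk k)) ((Mk k)%:R)^-1.

Lemma Mk_gt0 k : (0 < Mk k)%N. Proof. by rewrite /Mk expn_gt0. Qed.
Lemma MkS k : Mk k.+1 = (Mk k).*2. Proof. by rewrite /Mk expnS mul2n. Qed.
Lemma MkR_gt0 k : (0 : R) < (Mk k)%:R. Proof. by rewrite ltr0n Mk_gt0. Qed.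
Lemma Mk_mono j k : (j <= k)%N -> (Mk j <= Mk k)%N.
Proof. by move=> h; rewrite /Mk leq_exp2l. Qed.

Lemma fkE k : fk k = Num.max (sv k) ((Mk k)%:R)^-1.
Proof. by rewrite /fk /sv (SCDLm_eq P p y). Qed.

Lemma sv_ge0 k : 0 <= sv k. Proof. exact: Sv_ge0. Qed.

Lemma sv_le1 k : sv k <= 1.
Proof.
apply: Sv_le1; first exact: Mk_gt0.
  by move=> j; rewrite (av_ge0 P p y) ?(av_le_pv P p y).
exact: (sum_pv_le1 P p).
Qed.

Lemma sv_step k : sv k <= sv k.+1.
Proof.
rewrite /sv MkS; apply: Sv_mono; first exact: Mk_gt0.
- by move=> j; exact: (pv_ge0 P p).
- exact: (pv_top P p).
- exact: (av_top P p y).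
- by move=> j _; exact: (pv_refine P p).
- by move=> j _; exact: (av_refine P p y).
Qed.

Lemma sv_mono j k : (j <= k)%N -> sv j <= sv k.
Proof.
move=> /subnKC <-; elim: (k - j)%N => [|n IH]; first by rewrite addn0.
by apply: le_trans IH _; rewrite addnS; exact: sv_step.
Qed.

Lemma fk_ge0 k : 0 <= fk k.
Proof. by rewrite fkE le_max sv_ge0. Qed.

Lemma fk_le1 k : fk k <= 1.
Proof.
rewrite fkE ge_max sv_le1 /= invf_le1; last exact: MkR_gt0.
by rewrite ler1n Mk_gt0.
Qed.

Lemma hasinf : has_inf (range fk).
Proof.
split; first by exists (fk 0), 0.
by exists 0 => _ [k _ <-]; exact: fk_ge0.
Qed.

Lemma SCDLE : SCDL P p y = inf (range fk).
Proof. by []. Qed.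

Lemma SCDL_le k : SCDL P p y <= fk k.
Proof. by rewrite SCDLE; apply: ge_inf; [case: hasinf| exists k]. Qed.

Lemma SCDL_ge0 : 0 <= SCDL P p y.
Proof.
rewrite SCDLE; apply: lb_le_inf; first by exists (fk 0), 0.
by move=> _ [k _ <-]; exact: fk_ge0.
Qed.

Lemma SCDL_le1 : SCDL P p y <= 1.
Proof. exact: le_trans (SCDL_le 0) (fk_le1 0). Qed.

Lemma SCDL_adh e : 0 < e -> exists k, fk k < SCDL P p y + e.
Proof.
move=> e0; have [_ [k _ <-] h] := inf_adherent e0 hasinf.
by exists k; rewrite SCDLE.
Qed.

End SC.

Section Alg3.
Context {R : realType}.

Lemma half_alg (s1 s2 E : R) : 0 <= E -> E <= 1 -> 0 <= s1 -> 0 <= s2 -> s2 <= 1 ->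
  (forall t, 0 < t -> t <= 1 -> s2 <= t -> s1 <= t + 48 * E / t) ->
  s1 ^+ 2 <= s2 ^+ 2 + 2401 * E.
Proof.
move=> E0 E1 S1 S2 S21 bound.
set r := Num.sqrt E.
have r0 : 0 <= r by apply: sqrtr_ge0.
have rr : r ^+ 2 = E by apply: sqr_sqrtr.
have r1 : r <= 1 by rewrite -(sqrtr1 R) ler_sqrt.
have [sr|rs] := lerP r s2.
  have [s20|s2p] := eqVneq s2 0.
    have rz : r = 0 by lra.
    have Ez : E = 0 by rewrite -rr rz expr2 mulr0.
    have s1z : s1 <= 0.
      apply/ler_addgt0Pr => e e0.
      have [t1|t1] := lerP e 1.
        have := bound e e0 t1; rewrite Ez mulr0 mul0r addr0 add0r; apply; lra.
      have := bound 1 ltr01 (lexx 1); rewrite Ez mulr0 mul0r addr0 add0r; move=> h.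
      have := h S21; lra.
    have s1z' : s1 = 0 by lra.
    rewrite s1z' s20 expr2 mulr0 !add0r; lra.
  have s2pos : 0 < s2 by rewrite lt_def s2p.
  have b := bound s2 s2pos S21 (lexx _).
  set q := E / s2 in b.
  have q0 : 0 <= q by apply: divr_ge0.
  have b' : s1 <= s2 + 48 * q by rewrite /q mulrA.
  have qs : s2 * q = E by rewrite /q; field.
  have qle : q <= s2.
    by rewrite /q ler_pdivrMr // -rr expr2; exact: (@ler_pM _ _ _ _ _ r0 r0 sr sr).
  have q2 : q * q <= E by rewrite -qs; exact: (ler_wpM2r q0 qle).
  have hs : s1 * s1 <= (s2 + 48 * q) * (s2 + 48 * q) by exact: (@ler_pM _ _ _ _ _ S1 S1 b' b').
  have ex : (s2 + 48 * q) * (s2 + 48 * q) = s2 * s2 + 96 * (s2 * q) + 2304 * (q * q) by ring.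
  have ss : 0 <= s2 * s2 by apply: mulr_ge0.
  rewrite !expr2; lra.
have rpos : 0 < r by lra.
have b := bound r rpos r1 (ltW rs).
have e : 48 * E / r = 48 * r by rewrite -rr expr2; field; exact: lt0r_neq0.
rewrite e in b.
have h49 : s1 <= 49 * r.
  by rewrite (_ : 49 * r = r + 48 * r); [exact: b| ring].
have hs : s1 * s1 <= (49 * r) * (49 * r) by exact: (@ler_pM _ _ _ _ _ S1 S1 h49 h49).
have ex : (49 * r) * (49 * r) = 2401 * (r * r) by ring.
have ss : 0 <= s2 * s2 by apply: mulr_ge0.
rewrite -rr !expr2; lra.
Qed.

End Alg3.

Section Main.
Context {R : realType} {d : measure_display} {Omega : measurableType d}.
Variable P : probability Omega R.
Variables (p1 p2 y : Omega -> R).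
Hypothesis mp1 : measurable_fun setT p1.
Hypothesis mp2 : measurable_fun setT p2.
Hypothesis my : measurable_fun setT y.
Hypothesis p01_1 : forall x, 0 <= p1 x <= 1.
Hypothesis p01_2 : forall x, 0 <= p2 x <= 1.
Hypothesis y01 : forall x, y x = 0 \/ y x = 1.

Let s1 := SCDL P p1 y.
Let s2 := SCDL P p2 y.
Let E := E12 P p1 p2.

Lemma E_ge0 : 0 <= E. Proof. exact: E12_ge0. Qed.

Lemma E_le1 : E <= 1.
Proof.
rewrite /E /E12 -(Rint_cst P 1); apply: le_Rintegral => //.
- exact: bm_int (bm_norm _ (bmB _ _ (bm_p _ mp1 p01_1) (bm_p _ mp2 p01_2))).
- exact: bm_int (bm_cst _).
move=> x _; have := p01_1 x; have := p01_2 x => /andP[a b] /andP[c e].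
case: (norm_case (p1 x - p2 x)) => -[h ->]; lra.
Qed.

Lemma svlip i : sv P p1 y i <= sv P p2 y i + 24 * (Mk i)%:R * E.
Proof.
rewrite /sv; apply: le_trans (Sv_lip (pv P p1 (Mk i)) (av P p1 y (Mk i)) (pv P p2 (Mk i)) (av P p2 y (Mk i)) _ (Mk_gt0 i)) _.
rewrite lerD2l (_ : 24 * (Mk i)%:R * E = 2 * (12 * (Mk i)%:R * E)); last by ring.
by apply: ler_wpM2l => //; apply: (lipsum P p1 p2 y).
Qed.

Lemma key j : s1 <= Num.max s2 ((Mk j)%:R)^-1 + 24 * (Mk j)%:R * E.
Proof.
apply/ler_addgt0Pr => e e0.
have [k hk] : exists k, fk P p2 y k < SCDL P p2 y + e by apply: (SCDL_adh P p2 y).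
rewrite -/s2 in hk.
have E0 := E_ge0.
have m1 : s2 <= Num.max s2 ((Mk j)%:R)^-1 by rewrite le_max lexx.
have m2 : ((Mk j)%:R)^-1 <= Num.max s2 ((Mk j)%:R)^-1 by rewrite le_max lexx orbT.
have f2 : sv P p2 y k <= fk P p2 y k /\ ((Mk k)%:R)^-1 <= fk P p2 y k.
  by rewrite (fkE P p2 y) // !le_max !lexx orbT.
case: f2 => f2a f2b.
have dl : 0 <= 24 * (Mk j)%:R * E.
  by apply: mulr_ge0 => //; apply: mulr_ge0 => //; apply: ltW; exact: MkR_gt0.
case: (leqP j k) => jk.
  have h1 : s1 <= fk P p1 y j by exact: (SCDL_le P p1 y).
  rewrite (fkE P p1 y) // in h1.
  apply: le_trans h1 _; rewrite ge_max; apply/andP; split.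
    have sm : sv P p2 y j <= sv P p2 y k by apply: (sv_mono P p2 y).
    have := svlip j.
    lra.
  lra.
have h1 : s1 <= fk P p1 y k by exact: (SCDL_le P p1 y).
rewrite (fkE P p1 y) // in h1.
have dk : 24 * (Mk k)%:R * E <= 24 * (Mk j)%:R * E.
  apply: ler_wpM2r => //; apply: ler_wpM2l => //.
  by rewrite ler_nat; apply: Mk_mono; exact: ltnW.
apply: le_trans h1 _; rewrite ge_max; apply/andP; split.
  have := svlip k; lra.
lra.
Qed.

Lemma bound t : 0 < t -> t <= 1 -> s2 <= t -> s1 <= t + 48 * E / t.
Proof.
move=> t0 t1 st.
have it1 : 1 <= t^-1 by rewrite invf_ge1.
have it0 : 0 <= t^-1 by apply: le_trans it1.
set n := Num.Def.trunc t^-1.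
have /andP[n1 n2] := truncn_itv it0; rewrite -/n in n1 n2.
have n0 : (0 < n)%N by rewrite truncn_gt0.
have [b1 b2] := andP (trunc_log_bounds (isT : (1 < 2)%N) n0).
set j := trunc_log 2 n in b1 b2.
have Mj : Mk j = (2 ^ j.+1)%N by [].
have hM1 : (n.+1 <= Mk j)%N by rewrite Mj.
have hM2 : (Mk j <= n.*2)%N by rewrite Mj expnS mul2n leq_double.
have hM1R : (n.+1%:R : R) <= (Mk j)%:R by rewrite ler_nat.
have hM2R : ((Mk j)%:R : R) <= 2 * n%:R by rewrite -e2R ler_nat.
have MR : (0 : R) < (Mk j)%:R by exact: MkR_gt0.
have k1 := key j.
have E0 := E_ge0.
have iM : ((Mk j)%:R)^-1 <= t.
  rewrite invf_ple ?posrE ?MR //; exact: le_trans (ltW n2) hM1R.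
have mx : Num.max s2 ((Mk j)%:R)^-1 <= t by rewrite ge_max st iM.
have dd : 24 * (Mk j)%:R * E <= 48 * E / t.
  rewrite (_ : 48 * E / t = 24 * (2 * t^-1) * E); last by field; exact: lt0r_neq0.
  apply: ler_wpM2r => //; apply: ler_wpM2l => //.
  by apply: le_trans hM2R _; apply: ler_wpM2l.
by apply: le_trans k1 _; apply: lerD.
Qed.

Lemma s1_ge0 : 0 <= s1. Proof. exact: (SCDL_ge0 P p1 y). Qed.
Lemma s2_ge0 : 0 <= s2. Proof. exact: (SCDL_ge0 P p2 y). Qed.
Lemma s2_le1 : s2 <= 1. Proof. exact: (SCDL_le1 P p2 y). Qed.

Lemma half : s1 ^+ 2 <= s2 ^+ 2 + 2401 * E.
Proof.
apply: half_alg; [exact: E_ge0| exact: E_le1| exact: s1_ge0| exact: s2_ge0| exact: s2_le1|].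
exact: bound.
Qed.

End Main.

Section Fin.
Context {R : realType}.
Lemma fin_alg (a b E : R) : 0 <= a -> 0 <= b -> 0 <= E ->
  a ^+ 2 <= b ^+ 2 + 2401 * E -> b ^+ 2 <= a ^+ 2 + 2401 * E ->
  `|a ^+ 2 - b ^+ 2| <= 2401 * E /\ `|a - b| <= 2401 * Num.sqrt E.
Proof.
move=> a0 b0 E0 h1 h2.
have H : `|a ^+ 2 - b ^+ 2| <= 2401 * E.
  by case: (norm_case (a ^+ 2 - b ^+ 2)) => -[_ ->]; lra.
split => //.
set r := Num.sqrt E.
have r0 : 0 <= r by apply: sqrtr_ge0.
have rr : r ^+ 2 = E by apply: sqr_sqrtr.
rewrite -rr !expr2 in h1 h2.
have key : forall u v : R, 0 <= u -> 0 <= v -> v <= u -> u * u <= v * v + 2401 * (r * r) ->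
    u - v <= 49 * r.
  move=> u v u0 v0 vu h; nra.
case: (norm_case (a - b)) => -[h ->].
  have ba : b <= a by lra.
  have := key a b a0 b0 ba h1; lra.
have ab : a <= b by lra.
have := key b a b0 a0 ab h2; lra.
Qed.
End Fin.

Theorem theorem5p1 :
  exists C : nat, (0 < C)%N /\
  forall (R : realType) (d : measure_display) (Omega : measurableType d)
    (P : probability Omega R) (p1 p2 y : Omega -> R),
    measurable_fun setT p1 -> measurable_fun setT p2 -> measurable_fun setT y ->
    (forall x, 0 <= p1 x <= 1) -> (forall x, 0 <= p2 x <= 1) ->
    (forall x, y x = 0 \/ y x = 1) ->
    let E := Rintegral P setT (fun x => `|p1 x - p2 x|) in
    `|SCDL P p1 y ^+ 2 - SCDL P p2 y ^+ 2| <= C%:R * E /\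
    `|SCDL P p1 y - SCDL P p2 y| <= C%:R * Num.sqrt E.
Proof.
exists 2401%N; split => // R d Omega P p1 p2 y mp1 mp2 my h1 h2 hy E.
have E0 : 0 <= E by apply: Rintegral_ge0.
have H12 : SCDL P p1 y ^+ 2 <= SCDL P p2 y ^+ 2 + 2401 * E by apply: (half P p1 p2 y).
have e21 : E12 P p2 p1 = E.
  by apply: eq_Rintegral => x _; rewrite distrC.
have H21 : SCDL P p2 y ^+ 2 <= SCDL P p1 y ^+ 2 + 2401 * E.
  by rewrite -e21; apply: (half P p2 p1 y).
have S1 : 0 <= SCDL P p1 y by apply: (SCDL_ge0 P p1 y).
have S2 : 0 <= SCDL P p2 y by apply: (SCDL_ge0 P p2 y).
move: H12 H21 S1 S2; move: (SCDL P p1 y) (SCDL P p2 y) => a b H12 H21 S1 S2.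
exact: fin_alg.
Qed.
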